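(* In the binary sequential learning model described in the context, with information cascade threshold $k$, let $\tilde u(\varepsilon)=u(\varepsilon)(1-p)+p(1-u(\varepsilon))$ and $\rho(\varepsilon)=\frac{1-\tilde u(\varepsilon)}{\tilde u(\varepsilon)}$. If $\tilde u(\varepsilon)\neq\frac12$, the probability of a correct cascade is $$\mathbb{P}(\text{correct cascade})=\frac{\rho(\varepsilon)^k-1}{\rho(\varepsilon)^{2k}-1}.$$ If $\tilde u(\varepsilon)=\frac12$, an information cascade does not occur.
   Context: Binary model: unknown state $\theta\in\{-1,+1\}$ with uniform prior; agents $n=1,2,\dots$ act in sequence; agent $n$ privately observes $s_n\in\{-1,+1\}$, i.i.d. given $\theta$ with $\mathbb{P}(s_n=\theta\mid\theta)=p\in(1/2,1)$. Before a cascade, agent $n$'s intended action equals her signal and she publicly reports $x_n=a_n$ with probability $1-u(\varepsilon)$ and $x_n=-a_n$ with probability $u(\varepsilon)=\frac{1}{1+e^{\varepsilon}}$, where $\varepsilon>0$ is the privacy budget. The information cascade threshold is $k=\lfloor\log_{\rho(\varepsilon)}\frac{1-p}{p}\rfloor+1$. An information cascade starts at the first agent whose history has (number of $+1$ reports) $-$ (number of $-1$ reports) equal to $\pm k$; from then on all agents take and truthfully report the action favored by the history. It is a correct cascade if that action equals $\theta$. *)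

(* Defs.v *)
From HB Require Import structures.
From mathcomp Require Import all_boot all_order all_algebra.
From mathcomp Require Import all_classical all_reals.
From mathcomp Require Import topology normedtype sequences exp.
Set Implicit Arguments. Unset Strict Implicit. Unset Printing Implicit Defensive.
Import Order.TTheory GRing.Theory Num.Theory.
Local Open Scope ring_scope.

Section Model.
Variable R : realType.

(* States / signals / actions in {-1,+1} are encoded as bool: true = +1, false = -1. *)
Definition pm (b : bool) : int := if b then 1 else -1.

Definition u (eps : R) : R := 1 / (1 + expR eps).

Definition ut (p eps : R) : R := u eps * (1 - p) + p * (1 - u eps).

Definition rho (p eps : R) : R := (1 - ut p eps) / ut p eps.

Definition threshold (p eps : R) : int :=
  Num.floor (ln ((1 - p) / p) / ln (rho p eps)) + 1.

(* One agent's randomness (pre-cascade): (signal s_n, flip bit), flip = true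
   means the report is x_n = -a_n = -s_n. *)
Definition agent_weight (p eps : R) (theta : bool) (o : bool * bool) : R :=
  (if o.1 == theta then p else 1 - p) * (if o.2 then u eps else 1 - u eps).

Definition report (o : bool * bool) : int := pm (if o.2 then ~~ o.1 else o.1).

(* Walk along the history: d = (#(+1) reports) - (#(-1) reports) so far. *)
Fixpoint cascade (k d : int) (s : seq (bool * bool)) : option bool :=
  if d == k then Some true
  else if d == - k then Some false
  else match s with
       | [::] => None
       | o :: s' => cascade k (d + report o) s'
       end.

Definition P_correct_by (p eps : R) (N : nat) : R :=
  \sum_(theta : bool) (1 / 2) *
    \sum_(t : N.-tuple (bool * bool))
       (\prod_(o <- t) agent_weight p eps theta o) *
       (if cascade (threshold p eps) 0 t == Some theta then 1 else 0).

Definition P_cascade_by (p eps : R) (N : nat) : R :=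
  \sum_(theta : bool) (1 / 2) *
    \sum_(t : N.-tuple (bool * bool))
       (\prod_(o <- t) agent_weight p eps theta o) *
       (if cascade (threshold p eps) 0 t is Some _ then 1 else 0).

End Model.

(* Main.v *)
Require Import Defs.
From HB Require Import structures.
From mathcomp Require Import all_boot all_order all_algebra.
From mathcomp Require Import all_classical all_reals.
From mathcomp Require Import topology normedtype sequences exp.
From mathcomp Require Import ring lra zify.
Import Order.TTheory GRing.Theory Num.Theory.
Import numFieldNormedType.Exports.
Local Open Scope classical_set_scope.
Local Open Scope ring_scope.

Section Walk.
Variable R : realType.
Variables (q : R) (k : int).
Hypothesis hq1 : 1/2 < q.
Hypothesis hq2 : q < 1.
Hypothesis hk : 0 < k.

Fixpoint acc (N : nat) (d : int) : R :=
  match N with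
  | 0%N => if d == k then 1 else 0
  | N'.+1 => if d == k then 1 else if d == - k then 0
             else q * acc N' (d + 1) + (1 - q) * acc N' (d - 1)
  end.

Fixpoint surv (N : nat) (d : int) : R :=
  match N with
  | 0%N => if d == k then 0 else if d == - k then 0 else 1
  | N'.+1 => if d == k then 0 else if d == - k then 0
             else q * surv N' (d + 1) + (1 - q) * surv N' (d - 1)
  end.

Lemma survS N d : surv N.+1 d = if d == k then 0 else if d == - k then 0
             else q * surv N (d + 1) + (1 - q) * surv N (d - 1).
Proof. by []. Qed.

Lemma accS N d : acc N.+1 d = if d == k then 1 else if d == - k then 0
             else q * acc N (d + 1) + (1 - q) * acc N (d - 1).
Proof. by []. Qed.

Lemma surv01 N d : 0 <= surv N d <= 1.
Proof.
have hq1' := hq1; have hq2' := hq2; have hk' := hk.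
elim: N d => [|N IH] d /=.
  by case: (d == k); [|case: (d == - k)]; apply/andP; split; lra.
case: (d == k); [|case: (d == - k)]; try (apply/andP; split; lra).
move: (IH (d + 1)) (IH (d - 1)) => /andP[a1 a2] /andP[b1 b2].
have q0 : 0 <= q by lra.
have q1 : 0 <= 1 - q by lra.
have h1 := ler_wpM2l q0 a2.
have h2 := ler_wpM2l q1 b2.
have h3 := mulr_ge0 q0 a1.
have h4 := mulr_ge0 q1 b1.
apply/andP; split; lra.
Qed.

Lemma surv_dec N d : surv N.+1 d <= surv N d.
Proof.
have hq1' := hq1; have hq2' := hq2; have hk' := hk.
elim: N d => [|N IH] d.
  rewrite /=; case: (d == k); [|case: (d == - k)]; rewrite ?lexx //.
  move: (surv01 0 (d + 1)) (surv01 0 (d - 1)) => /andP[a1 a2] /andP[b1 b2].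
  rewrite /= in a1 a2 b1 b2.
  have q0 : 0 <= q by lra.
  have q1 : 0 <= 1 - q by lra.
  have h1 := ler_wpM2l q0 a2.
  have h2 := ler_wpM2l q1 b2.
  lra.
rewrite survS [surv N.+1 d]survS.
case: (d == k); [|case: (d == - k)]; rewrite ?lexx //.
move: (IH (d + 1)) (IH (d - 1)) => a b.
have q0 : 0 <= q by lra.
have q1 : 0 <= 1 - q by lra.
have h1 := ler_wpM2l q0 a.
have h2 := ler_wpM2l q1 b.
lra.
Qed.

Lemma surv_anti n N d : (n <= N)%N -> surv N d <= surv n d.
Proof.
have hq1' := hq1; have hq2' := hq2; have hk' := hk.
move=> /subnK <-; elim: (N - n)%N => [|m IH]; first by rewrite add0n.
by rewrite addSn (le_trans (surv_dec _ _)).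
Qed.

Definition V (d : int) : R := (k%:~R - d%:~R) / (2 * q - 1).

Lemma surv_sum N d : - k <= d <= k -> \sum_(0 <= n < N) surv n d <= V d.
Proof.
have hq1' := hq1; have hq2' := hq2; have hk' := hk.
have q0 : 0 < 2 * q - 1 by lra.
elim: N d => [|N IH] d /andP[d1 d2].
  rewrite big_geq // /V divr_ge0 ?(ltW q0) // subr_ge0 ler_int //.
rewrite big_nat_recl //.
have Vd0 : 0 <= V d by rewrite /V divr_ge0 ?(ltW q0) // subr_ge0 ler_int.
case: (d =P k) => [dk|/eqP dk].
  rewrite big1 => [|i _]; last by rewrite /= dk eqxx.
  by rewrite /= dk eqxx addr0 -dk.
case: (d =P - k) => [dmk|/eqP dmk].
  rewrite big1 => [|i _]; last by rewrite /= (negbTE dk) dmk eqxx.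
  by rewrite /= (negbTE dk) dmk eqxx addr0 -dmk.
rewrite /= (negbTE dk) (negbTE dmk).
rewrite big_split /= -!big_distrr /=.
have i1 : - k <= d + 1 <= k by apply/andP; split; lia.
have i2 : - k <= d - 1 <= k by apply/andP; split; lia.
have A := ler_wpM2l (ltW (lt_trans _ hq1)) (IH _ i1).
have B := ler_wpM2l (_ : 0 <= 1 - q) (IH _ i2).
have -> : V d = 1 + (q * V (d + 1) + (1 - q) * V (d - 1)).
  rewrite /V !intrD intrN /=; field; lra.
rewrite lerD2l lerD //; first by apply: A; lra.
by apply: B; lra.
Qed.

Lemma surv_bound N : (N%:R * surv N 0 <= V 0).
Proof.
have hq1' := hq1; have hq2' := hq2; have hk' := hk.
have S : \sum_(0 <= n < N) surv n 0 <= V 0.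
  by apply: surv_sum; apply/andP; split; lia.
apply: le_trans S.
have -> : N%:R * surv N 0 = \sum_(0 <= n < N) surv N 0.
  by rewrite sumr_const_nat subn0 mulr_natl.
by apply: ler_sum_nat => i /andP[_ iN]; apply: surv_anti; apply: ltnW.
Qed.

Definition rh := (1 - q) / q.
Definition h (d : int) : R := (rh ^ (d + k) - 1) / (rh ^ (2 * k) - 1).


Lemma rh_gt0 : 0 < rh.
Proof. have hq1' := hq1; have hq2' := hq2. rewrite /rh divr_gt0 //; lra. Qed.

Lemma rh_lt1 : rh < 1.
Proof. have hq1' := hq1; have hq2' := hq2. rewrite /rh ltr_pdivrMr; lra. Qed.

Lemma rhX_le a b : 0 <= a -> a <= b -> rh ^ b <= rh ^ a.
Proof.
move=> a0 ab; apply: (ler_wpiXz2l (ltW rh_gt0) (ltW rh_lt1)) => //.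
  exact: (le_trans a0 ab).
Qed.

Lemma D_lt0 : rh ^ (2 * k) - 1 < 0.
Proof.
have hk' := hk.
rewrite subr_lt0; apply: le_lt_trans (rh_lt1).
rewrite -[X in _ <= X]expr1z; apply: rhX_le; lia.
Qed.

Lemma h_k : h k = 1.
Proof.
have D0 := D_lt0.
rewrite /h; have -> : k + k = 2 * k by lia.
by rewrite divff // lt_eqF.
Qed.

Lemma h_mk : h (- k) = 0.
Proof. by rewrite /h addNr expr0z subrr mul0r. Qed.

Lemma h01 d : - k <= d <= k -> 0 <= h d <= 1.
Proof.
have hk' := hk.
move=> /andP[d1 d2].
have D0 := D_lt0.
have Y1 : rh ^ (2 * k) <= rh ^ (d + k) by apply: rhX_le; lia.
have X1 : rh ^ (d + k) <= 1 by rewrite -(expr0z rh); apply: rhX_le; lia.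
rewrite /h -(opprB 1 (rh ^ (d + k))) -(opprB 1 (rh ^ (2 * k))) invrN mulrNN.
apply/andP; split.
  by rewrite divr_ge0 // subr_ge0 // ltW // -subr_lt0.
by rewrite ler_pdivrMr ?mul1r; lra.
Qed.

Lemma h_harm d : h d = q * h (d + 1) + (1 - q) * h (d - 1).
Proof.
have hq1' := hq1; have hq2' := hq2.
have D0 := D_lt0.
have r0 : rh != 0 by rewrite gt_eqF // rh_gt0.
rewrite /h.
have -> : d + 1 + k = (d + k) + 1 by ring.
have -> : d - 1 + k = (d + k) + (-1) by ring.
rewrite !expfzDr // expr1z exprN1.
move: (lt_eqF D0) r0; rewrite /rh => /negbT D0' r0.
field; rewrite ?D0' //; apply/and3P; split => //; apply/eqP; lra.
Qed.

Lemma acc_bound N d : - k <= d <= k -> `|h d - acc N d| <= surv N d.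
Proof.
have hq1' := hq1; have hq2' := hq2; have hk' := hk.
have nk : (- k == k) = false by apply/eqP; lia.
elim: N d => [|N IH] d /andP[d1 d2].
  case: (d =P k) => [->|/eqP dk]; first by rewrite /= eqxx h_k subrr normr0.
  case: (d =P - k) => [->|/eqP dmk].
    by rewrite /= nk eqxx h_mk subrr normr0.
  rewrite /= (negbTE dk) (negbTE dmk) subr0.
  have /andP[h0 h1] := h01 d (introT andP (conj d1 d2)).
  by rewrite ger0_norm.
case: (d =P k) => [->|/eqP dk]; first by rewrite accS survS eqxx h_k subrr normr0.
case: (d =P - k) => [->|/eqP dmk].
  by rewrite accS survS nk eqxx h_mk subrr normr0.
rewrite accS survS (negbTE dk) (negbTE dmk) {1}(h_harm d).
have i1 : - k <= d + 1 <= k by apply/andP; split; lia.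
have i2 : - k <= d - 1 <= k by apply/andP; split; lia.
set a1 := acc N (d + 1); set a2 := acc N (d - 1).
have -> : q * h (d + 1) + (1 - q) * h (d - 1) - (q * a1 + (1 - q) * a2) =
   q * (h (d + 1) - a1) + (1 - q) * (h (d - 1) - a2) by ring.
apply: le_trans (ler_normD _ _) _.
have q0 : 0 <= q by lra.
have q1 : 0 <= 1 - q by lra.
rewrite !normrM (ger0_norm q0) (ger0_norm q1).
by apply: lerD; apply: ler_wpM2l => //; apply: IH.
Qed.

End Walk.
Lemma sum_tuple_cons (R : realType) (T : finType) N (F : N.+1.-tuple T -> R) :
  \sum_(t : N.+1.-tuple T) F t = \sum_(x : T) \sum_(t : N.-tuple T) F [tuple of x :: t].
Proof.
rewrite pair_bigA /=.
rewrite (reindex (fun p : T * N.-tuple T => [tuple of p.1 :: p.2])) //=.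
exists (fun t => (thead t, [tuple of behead t])) => [[x t] _|t _] /=.
  by rewrite theadE; congr pair; apply: val_inj.
by rewrite [RHS]tuple_eta.
Qed.

Lemma sum_tuple0 (R : realType) (T : finType) (F : 0.-tuple T -> R) :
  \sum_(t : 0.-tuple T) F t = F [tuple].
Proof.
rewrite (big_pred1 [tuple]) // => t; symmetry; apply/eqP; apply: val_inj.
by case: t => -[].
Qed.

Section Tup.
Variable R : realType.
Variables (p eps : R).
Let w := agent_weight p eps.
Let q := ut p eps.

Lemma sum_w_report th (F : int -> R) :
  \sum_(o : bool * bool) w th o * F (report o) =
  (if th then q else 1 - q) * F 1 + (if th then 1 - q else q) * F (-1).
Proof.
transitivity (\sum_(a : bool) \sum_(b : bool) w th (a, b) * F (report (a, b))).
  by rewrite pair_bigA; apply: eq_bigr => -[a b].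
rewrite !big_bool /w /q /agent_weight /report /ut /=.
by case: th => /=; ring.
Qed.

Lemma sum_w1 th N : \sum_(t : N.-tuple (bool * bool)) \prod_(o <- t) w th o = 1.
Proof.
elim: N => [|N IH]; first by rewrite sum_tuple0 big_nil.
rewrite sum_tuple_cons.
under eq_bigr => x _ do under eq_bigr => t _ do rewrite big_cons.
under eq_bigr => x _ do rewrite -big_distrr /= IH mulr1.
have := sum_w_report th (fun _ => 1); rewrite /=.
under eq_bigr => o _ do rewrite mulr1.
move=> ->; clear IH; by case: th; ring.
Qed.

Lemma cascadeE k d s : cascade k d s =
  if d == k then Some true else if d == - k then Some false
  else if s is o :: s' then cascade k (d + report o) s' else None.
Proof. by case: s. Qed.

Lemma step th k N d (f : option bool -> R) :
  \sum_(t : N.+1.-tuple (bool * bool)) (\prod_(o <- t) w th o) * f (cascade k d t) =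
  if d == k then f (Some true) else if d == - k then f (Some false)
  else \sum_(x : bool * bool) w th x *
         \sum_(t : N.-tuple (bool * bool)) (\prod_(o <- t) w th o) * f (cascade k (d + report x) t).
Proof.
case: (d =P k) => [dk|/eqP dk].
  under eq_bigr => t _ do rewrite cascadeE dk eqxx.
  by rewrite -big_distrl /= sum_w1 mul1r.
case: (d =P - k) => [dmk|/eqP dmk].
  rewrite dmk in dk *.
  under eq_bigr => t _ do rewrite cascadeE (negbTE dk) eqxx.
  by rewrite -big_distrl /= sum_w1 mul1r.
rewrite sum_tuple_cons; apply: eq_bigr => x _.
rewrite big_distrr; apply: eq_bigr => t _ /=.
by rewrite big_cons (negbTE dk) (negbTE dmk) mulrA.
Qed.


Lemma tuple_true k N d :
  \sum_(t : N.-tuple (bool * bool)) (\prod_(o <- t) w true o) *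
     (if cascade k d t == Some true then 1 else 0) = acc R q k N d.
Proof.
elim: N d => [|N IH] d.
  rewrite sum_tuple0 big_nil mul1r cascadeE /=.
  by case: (d == k) => //; case: (d == - k).
rewrite (step true k N d (fun c => if c == Some true then 1 else 0)) accS.
case: (d == k) => //; case: (d == - k) => //.
under eq_bigr => x _ do rewrite IH.
have := sum_w_report true (fun r => acc R q k N (d + r)); rewrite /= => ->.
by [].
Qed.

Lemma tuple_false k N d : 0 < k ->
  \sum_(t : N.-tuple (bool * bool)) (\prod_(o <- t) w false o) *
     (if cascade k d t == Some false then 1 else 0) = acc R q k N (- d).
Proof.
move=> hk.
have nk : (- k == k) = false by apply/eqP; lia.
elim: N d => [|N IH] d.
  rewrite sum_tuple0 big_nil mul1r cascadeE /=.
  case: (d =P k) => [->|/eqP dk]; first by rewrite nk.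
  case: (d =P - k) => [->|/eqP dmk]; first by rewrite opprK !eqxx.
  have -> : (- d == k) = false.
    by apply/negbTE; apply: contra dmk => /eqP <-; rewrite opprK.
  by [].
rewrite (step false k N d (fun c => if c == Some false then 1 else 0)) accS.
case: (d =P k) => [->|/eqP dk]; first by rewrite nk eqxx.
case: (d =P - k) => [->|/eqP dmk]; first by rewrite opprK !eqxx.
have -> : (- d == k) = false.
  by apply/negbTE; apply: contra dmk => /eqP <-; rewrite opprK.
have -> : (- d == - k) = false.
  by apply/negbTE; apply: contra dk => /eqP /oppr_inj ->.
under eq_bigr => x _ do rewrite IH.
have := sum_w_report false (fun r => acc R q k N (- (d + r))); rewrite /= => ->.
by rewrite !opprD opprK addrC.
Qed.

End Tup.

Theorem lemma2 (R : realType) (p eps : R) :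
  1 / 2 < p -> p < 1 -> 0 < eps ->
  (ut p eps != 1 / 2 ->
     P_correct_by p eps @ \oo -->
       (rho p eps ^ threshold p eps - 1) /
       (rho p eps ^ (2 * threshold p eps) - 1))
  /\
  (ut p eps = 1 / 2 -> forall N, P_cascade_by p eps N = 0).
Proof.
move=> hp1 hp2 he.
have eg : 1 < expR eps := pexpR_gt1 he.
have uE : u eps * (1 + expR eps) = 1.
  by rewrite /u mul1r mulVf // gt_eqF //; lra.
have u0 : 0 < u eps by rewrite /u divr_gt0 //; lra.
have m0 : 0 < u eps * (expR eps - 1) by apply: mulr_gt0; lra.
have u12 : u eps < 1 / 2 by lra.
have m1 : 0 < (p - 1/2) * (1 - 2 * u eps) by apply: mulr_gt0; lra.
have m2 : 0 < u eps * (2 * p - 1) by apply: mulr_gt0; lra.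
have hq1 : 1 / 2 < ut p eps by rewrite /ut; lra.
have hq2 : ut p eps < 1 by rewrite /ut; lra.
split; last by move=> E; exfalso; lra.
move=> _.
set q := ut p eps in hq1 hq2 *.
set k := threshold p eps.
have hk : 0 < k.
  rewrite /k /threshold.
  have a01 : 0 < (1 - p) / p < 1.
    apply/andP; split; first by rewrite divr_gt0 //; lra.
    by rewrite ltr_pdivrMr; lra.
  have r01 : 0 < rho p eps < 1.
    by apply/andP; split; [exact: (rh_gt0 _ _ hq1 hq2) | exact: (rh_lt1 _ _ hq1 hq2)].
  have l1 := ln_lt0 a01.
  have l2 := ln_lt0 r01.
  have : 0 <= Num.floor (ln ((1 - p) / p) / ln (rho p eps)).
    by rewrite floor_ge0 -mulrNN -invrN divr_ge0 // oppr_ge0 ltW.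
  by move=> h0; exact: ltr_wpDl h0 ltr01.
have PE : P_correct_by p eps = fun N => acc R q k N 0.
  apply: boolp.funext => N.
  rewrite /P_correct_by big_bool /=.
  rewrite (tuple_true R p eps k N 0) (tuple_false R p eps k N 0 hk) oppr0.
  by field.
have -> : (rho p eps ^ k - 1) / (rho p eps ^ (2 * k) - 1) = h R q k 0.
  by rewrite /h add0r.
rewrite PE.
apply/cvgrPdist_le => e e0.
near=> N.
have dk : - k <= 0 <= k.
  by apply/andP; split; [rewrite oppr_le0|]; exact: ltW hk.
have B := acc_bound _ _ _ hq1 hq2 hk N 0 dk.
have SB := surv_bound _ _ _ hq1 hq2 hk N.
have HN : V R q k 0 / e < N%:R by near: N; exact: nbhs_infty_gtr.
have V0 : 0 <= V R q k 0.
  have q2 : 0 <= 2 * q - 1 by lra.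
  by rewrite /V divr_ge0 // subr_ge0 ler_int ltW.
move: HN; rewrite ltr_pdivrMr // => HN.
have Npos : 0 < N%:R :> R.
  rewrite lt_neqAle ler0n andbT; apply/eqP => N0; move: HN.
  by rewrite -N0 mul0r ltNge V0.
apply: le_trans B _.
rewrite -(ler_pM2l Npos); apply: le_trans SB _; exact: ltW.
Unshelve. all: by end_near.
Qed.
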